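(* For every QPTL formula $\varphi$ and every hyperassignment $\mathcal X\in\mathrm{HAsg}_\supseteq(\mathrm{free}(\varphi))$: (1) $\mathcal X\models^{\exists\forall}\varphi$ iff there exists $X\in\mathcal X$ such that $\chi\models\varphi$ for all $\chi\in X$; (2) $\mathcal X\models^{\forall\exists}\varphi$ iff for every $X\in\mathcal X$ there is $\chi\in X$ with $\chi\models\varphi$, where on the right-hand sides $\models$ is the Tarski semantics.
   Context: Let $AP$ be a set of atomic propositions and $\mathbb B=\{\top,\bot\}$. A temporal valuation is a function $f:\mathbb N\to\mathbb B$. An assignment is a partial function $\chi:AP\rightharpoonup(\mathbb N\to\mathbb B)$; $\mathrm{Asg}$ is the set of all assignments, $\mathrm{Asg}(P)$ the set of assignments with domain exactly $P\subseteq AP$, and $\mathrm{Asg}_\supseteq(P)$ the set of assignments whose domain contains $P$. For an assignment $\chi$, $p\in AP$ and a temporal valuation $f$, $\chi[p\mapsto f]$ is the assignment that agrees with $\chi$ except that it maps $p$ to $f$. Tarski semantics of QPTL (formulas $\varphi::=\psi\mid\neg\varphi\mid\varphi\wedge\varphi\mid\varphi\vee\varphi\mid\exists p.\varphi\mid\forall p.\varphi$, $\psi$ LTL), for $\chi\in\mathrm{Asg}_\supseteq(\mathrm{free}(\varphi))$: $\chi\models\psi$ iff $\chi\models_{LTL}\psi$ (see below); Boolean connectives as usual; $\chi\models\exists p.\phi$ iff $\chi[p\mapsto f]\models\phi$ for some temporal valuation $f$; $\chi\models\forall p.\phi$ iff for all $f$. A hyperassignment is a set $\mathcal X$ with $\emptyset\neq\mathcal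 X\subseteq 2^{\mathrm{Asg}(P)}$ and $\emptyset\notin\mathcal X$, for some $P\subseteq AP$; this $P$ is denoted $\mathrm{ap}(\mathcal X)$. $\mathrm{HAsg}$ is the set of all hyperassignments, $\mathrm{HAsg}(P)$ those with $\mathrm{ap}(\mathcal X)=P$, and $\mathrm{HAsg}_\supseteq(P)$ those with $\mathrm{ap}(\mathcal X)\supseteq P$. A choice function for $\mathcal X$ is a map $c:\mathcal X\to\mathrm{Asg}$ with $c(X)\in X$ for all $X\in\mathcal X$. The dual of $\mathcal X$ is $\overline{\mathcal X}=\{\mathrm{img}(c): c\text{ a choice function for }\mathcal X\}$. $\mathrm{par}(\mathcal X)$ is the set of pairs $(\mathcal X_1,\mathcal X_2)$ of (possibly empty) subsets of $\mathcal X$ with $\mathcal X_1\cap\mathcal X_2=\emptyset$ and $\mathcal X_1\cup\mathcal X_2=\mathcal X$. A functor over $P\subseteq AP$ is a function $F:\mathrm{Asg}(P)\to(\mathbb N\to\mathbb B)$; $\mathrm{Fnc}(P)$ is the set of all functors over $P$. For $\chi\in\mathrm{Asg}(P)$, $F\in\mathrm{Fnc}(P)$ and $p\in AP$, $\mathrm{ext}(\chi,F,p)=\chi[p\mapsto F(\chi)]$; for $X\subseteq\mathrm{Asg}(P)$, $\mathrm{ext}(X,F,p)=\{\mathrm{ext}(\chi,F,p):\chi\in X\}$; for a hyperassignment $\mathcal X$, $\mathrm{ext}(\mathcal X,p)=\{\mathrm{ext}(X,F,p):X\in\mathcal X,\ F\in\mathrm{Fnc}(\mathrm{ap}(\mathcal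 X))\}$. $\chi\models_{LTL}\psi$ iff the infinite word whose $t$-th letter is the valuation $q\mapsto\chi(q)(t)$ satisfies the LTL formula $\psi$ in the standard sense. Alternation flags are $\exists\forall$ and $\forall\exists$; $\bar\alpha$ denotes the flag different from $\alpha$. Alternating Hodges semantics of QPTL: for a QPTL formula $\varphi$, $\mathcal X\in\mathrm{HAsg}_\supseteq(\mathrm{free}(\varphi))$ and flag $\alpha$, $\mathcal X\models^\alpha\varphi$ is defined inductively: (1) for LTL $\psi$: $\mathcal X\models^{\exists\forall}\psi$ iff there is $X\in\mathcal X$ with $\chi\models_{LTL}\psi$ for all $\chi\in X$; $\mathcal X\models^{\forall\exists}\psi$ iff for every $X\in\mathcal X$ there is $\chi\in X$ with $\chi\models_{LTL}\psi$; (2) $\mathcal X\models^\alpha\neg\phi$ iff not $\mathcal X\models^{\bar\alpha}\phi$; (3) $\mathcal X\models^{\exists\forall}\phi_1\wedge\phi_2$ iff for every $(\mathcal X_1,\mathcal X_2)\in\mathrm{par}(\mathcal X)$, either ($\mathcal X_1\ne\emptyset$ and $\mathcal X_1\models^{\exists\forall}\phi_1$) or ($\mathcal X_2\ne\emptyset$ and $\mathcal X_2\models^{\exists\forall}\phi_2$); $\mathcal X\models^{\forall\exists}\phi_1\wedge\phi_2$ iff $\overline{\mathcal X}\models^{\exists\forall}\phi_1\wedge\phi_2$; (4) $\mathcal X\models^{\forall\exists}\phi_1\vee\phi_2$ iff there is $(\mathcal X_1,\mathcal X_2)\in\mathrm{par}(\mathcal X)$ such that ($\mathcal X_1\neq\emptyset$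 implies $\mathcal X_1\models^{\forall\exists}\phi_1$) and ($\mathcal X_2\neq\emptyset$ implies $\mathcal X_2\models^{\forall\exists}\phi_2$); $\mathcal X\models^{\exists\forall}\phi_1\vee\phi_2$ iff $\overline{\mathcal X}\models^{\forall\exists}\phi_1\vee\phi_2$; (5) $\mathcal X\models^{\exists\forall}\exists p.\phi$ iff $\mathrm{ext}(\mathcal X,p)\models^{\exists\forall}\phi$; $\mathcal X\models^{\forall\exists}\exists p.\phi$ iff $\overline{\mathcal X}\models^{\exists\forall}\exists p.\phi$; (6) $\mathcal X\models^{\forall\exists}\forall p.\phi$ iff $\mathrm{ext}(\mathcal X,p)\models^{\forall\exists}\phi$; $\mathcal X\models^{\exists\forall}\forall p.\phi$ iff $\overline{\mathcal X}\models^{\forall\exists}\forall p.\phi$. *)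

(* Defs.v *)
From Stdlib Require Import ClassicalEpsilon.
Set Implicit Arguments.

Section QPTL.
Variable AP : Type.

Definition tval := nat -> bool.
Definition asg := AP -> option tval.

Definition upd (chi : asg) (p : AP) (f : tval) : asg :=
  fun q => if excluded_middle_informative (q = p) then Some f else chi q.

Inductive ltl : Type :=
| LTrue
| LAtom (p : AP)
| LNot (a : ltl)
| LAnd (a b : ltl)
| LOr (a b : ltl)
| LNext (a : ltl)
| LUntil (a b : ltl).

Fixpoint ltl_sat (w : nat -> AP -> bool) (i : nat) (psi : ltl) : Prop :=
  match psi with
  | LTrue => True
  | LAtom p => w i p = true
  | LNot a => ~ ltl_sat w i a
  | LAnd a b => ltl_sat w i a /\ ltl_sat w i b
  | LOr a b => ltl_sat w i a \/ ltl_sat w i b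
  | LNext a => ltl_sat w (S i) a
  | LUntil a b => exists k, i <= k /\ ltl_sat w k b /\
                    forall j, i <= j -> j < k -> ltl_sat w j a
  end.

Fixpoint ltl_free (psi : ltl) : AP -> Prop :=
  match psi with
  | LTrue => fun _ => False
  | LAtom p => fun q => q = p
  | LNot a | LNext a => ltl_free a
  | LAnd a b | LOr a b | LUntil a b => fun q => ltl_free a q \/ ltl_free b q
  end.

(* the word whose t-th letter is q |-> chi(q)(t)
   (propositions outside dom chi read as false; irrelevant on Asg_sup(free)) *)
Definition word_of (chi : asg) : nat -> AP -> bool :=
  fun t q => match chi q with Some f => f t | None => false end.

Definition ltl_models (chi : asg) (psi : ltl) : Prop := ltl_sat (word_of chi) 0 psi.

Inductive qptl : Type :=
| QLtl (psi : ltl)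
| QNot (a : qptl)
| QAnd (a b : qptl)
| QOr (a b : qptl)
| QEx (p : AP) (a : qptl)
| QAll (p : AP) (a : qptl).

Fixpoint free (phi : qptl) : AP -> Prop :=
  match phi with
  | QLtl psi => ltl_free psi
  | QNot a => free a
  | QAnd a b | QOr a b => fun q => free a q \/ free b q
  | QEx p a | QAll p a => fun q => free a q /\ q <> p
  end.

Fixpoint tarski (chi : asg) (phi : qptl) : Prop :=
  match phi with
  | QLtl psi => ltl_models chi psi
  | QNot a => ~ tarski chi a
  | QAnd a b => tarski chi a /\ tarski chi b
  | QOr a b => tarski chi a \/ tarski chi b
  | QEx p a => exists f : tval, tarski (upd chi p f) a
  | QAll p a => forall f : tval, tarski (upd chi p f) a
  end.

Definition aset := asg -> Prop.
Definition hset := aset -> Prop.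

Definition dom_exactly (P : AP -> Prop) (chi : asg) : Prop :=
  forall q, P q <-> chi q <> None.

Definition is_hasg (P : AP -> Prop) (HX : hset) : Prop :=
  (exists X, HX X) /\
  (forall X, HX X -> exists chi, X chi) /\
  (forall X chi, HX X -> X chi -> dom_exactly P chi).

Definition in_HAsg_sup (Q : AP -> Prop) (HX : hset) : Prop :=
  exists P, is_hasg P HX /\ forall q, Q q -> P q.

Definition choice_fun (HX : hset) (c : aset -> asg) : Prop :=
  forall X, HX X -> X (c X).
Definition img (HX : hset) (c : aset -> asg) : aset :=
  fun chi => exists X, HX X /\ c X = chi.
Definition dual (HX : hset) : hset :=
  fun Y => exists c, choice_fun HX c /\ Y = img HX c.

Definition is_par (HX HX1 HX2 : hset) : Prop :=
  (forall Y, ~ (HX1 Y /\ HX2 Y)) /\ (forall Y, HX Y <-> HX1 Y \/ HX2 Y).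
Definition nonempty (HX : hset) : Prop := exists Y, HX Y.

(* functors and extension; a functor over ap(HX) is represented by a total
   function asg -> tval (only its values on Asg(ap(HX)) are ever used) *)
Definition functor := asg -> tval.
Definition ext_asg (chi : asg) (F : functor) (p : AP) : asg := upd chi p (F chi).
Definition ext_set (X : aset) (F : functor) (p : AP) : aset :=
  fun chi' => exists chi, X chi /\ chi' = ext_asg chi F p.
Definition ext_hset (HX : hset) (p : AP) : hset :=
  fun Y => exists X (F : functor), HX X /\ Y = ext_set X F p.

End QPTL.

Arguments LTrue {AP}.

Inductive flag : Type := EA | AE.
Definition flip (a : flag) : flag := match a with EA => AE | AE => EA end.

Fixpoint hodges {AP : Type} (phi : qptl AP) : flag -> hset AP -> Prop :=
  match phi with
  | QLtl psi => fun a HX =>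
      match a with
      | EA => exists X, HX X /\ forall chi, X chi -> ltl_models chi psi
      | AE => forall X, HX X -> exists chi, X chi /\ ltl_models chi psi
      end
  | QNot b => fun a HX => ~ hodges b (flip a) HX
  | QAnd b1 b2 =>
      let ea := fun HX : hset AP => forall HX1 HX2, is_par HX HX1 HX2 ->
                  (nonempty HX1 /\ hodges b1 EA HX1) \/
                  (nonempty HX2 /\ hodges b2 EA HX2) in
      fun a HX => match a with EA => ea HX | AE => ea (dual HX) end
  | QOr b1 b2 =>
      let ae := fun HX : hset AP => exists HX1 HX2, is_par HX HX1 HX2 /\
                  (nonempty HX1 -> hodges b1 AE HX1) /\
                  (nonempty HX2 -> hodges b2 AE HX2) in
      fun a HX => match a with AE => ae HX | EA => ae (dual HX) end
  | QEx p b =>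
      let ea := fun HX : hset AP => hodges b EA (ext_hset HX p) in
      fun a HX => match a with EA => ea HX | AE => ea (dual HX) end
  | QAll p b =>
      let ae := fun HX : hset AP => hodges b AE (ext_hset HX p) in
      fun a HX => match a with AE => ae HX | EA => ae (dual HX) end
  end.

(* Main.v *)
Require Import Defs.
From Stdlib Require Import Classical ClassicalEpsilon.

Section Aux.
Variable AP : Type.

Lemma sup_sub (Q Q' : AP -> Prop) (HX HX1 : hset AP) :
  in_HAsg_sup Q HX -> (forall q, Q' q -> Q q) -> (forall Y, HX1 Y -> HX Y) ->
  nonempty HX1 -> in_HAsg_sup Q' HX1.
Proof.
  intros [P [[_ [Hne Hd]] HQ]] HQ' Hs [Y HY].
  exists P; split; [split; [eauto | split; eauto] | eauto].
Qed.

Lemma dual_sup (Q : AP -> Prop) (HX : hset AP) :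
  in_HAsg_sup Q HX -> in_HAsg_sup Q (dual HX).
Proof.
  intros [P [[[X0 HX0] [Hne Hd]] HQ]].
  exists P; split; [|exact HQ].
  set (c := fun X : aset AP => epsilon (inhabits (fun _ : AP => @None (tval))) (fun chi => X chi)).
  assert (Hc : choice_fun HX c).
  { intros X HXX. unfold c. apply epsilon_spec. apply Hne; auto. }
  split; [|split].
  - exists (img HX c). exists c; split; auto.
  - intros Y [c' [Hc' ->]]. exists (c' X0). exists X0; split; auto.
  - intros Y chi [c' [Hc' ->]] [X [HXX <-]]. apply (Hd X); [exact HXX | apply Hc'; exact HXX].
Qed.

Lemma ext_sup (phi : qptl AP) (p : AP) (HX : hset AP) :
  in_HAsg_sup (fun q => free phi q /\ q <> p) HX -> in_HAsg_sup (free phi) (ext_hset HX p).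
Proof.
  intros [P [[[X0 HX0] [Hne Hd]] HQ]].
  exists (fun q => P q \/ q = p). split.
  - split; [|split].
    + exists (ext_set X0 (fun _ _ => false) p). exists X0, (fun _ _ => false); auto.
    + intros Y [X [F [HXX ->]]]. destruct (Hne X HXX) as [chi Xc].
      exists (ext_asg chi F p). exists chi; auto.
    + intros Y chi' [X [F [HXX ->]]] [chi [Xc ->]] q. unfold ext_asg, upd.
      destruct (excluded_middle_informative (q = p)).
      * split; [intros _; discriminate | intros _; right; auto].
      * specialize (Hd X chi HXX Xc q). tauto.
  - intros q Hq. destruct (classic (q = p)); [right; auto | left; apply HQ; auto].
Qed.

Lemma dualEA (HX : hset AP) (Q : asg AP -> Prop) :
  (exists Y, dual HX Y /\ forall chi, Y chi -> Q chi) <->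
  (forall X, HX X -> exists chi, X chi /\ Q chi).
Proof.
  split.
  - intros [Y [[c [Hc ->]] Hall]] X HXX. exists (c X). split; [apply Hc; auto|].
    apply Hall. exists X; auto.
  - intros Hall.
    set (c := fun X : aset AP => epsilon (inhabits (fun _ : AP => @None (tval))) (fun chi => X chi /\ Q chi)).
    assert (Hc : forall X, HX X -> X (c X) /\ Q (c X)).
    { intros X HXX. unfold c. apply epsilon_spec. apply Hall; auto. }
    exists (img HX c). split.
    + exists c. split; auto. intros X HXX; apply Hc; auto.
    + intros chi [X [HXX <-]]. apply Hc; auto.
Qed.

Lemma dualAE (HX : hset AP) (Q : asg AP -> Prop) :
  (forall Y, dual HX Y -> exists chi, Y chi /\ Q chi) <->
  (exists X, HX X /\ forall chi, X chi -> Q chi).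
Proof.
  split.
  - intros Hall. apply NNPP; intro Hno.
    set (c := fun X : aset AP => epsilon (inhabits (fun _ : AP => @None (tval))) (fun chi => X chi /\ ~ Q chi)).
    assert (Hc : forall X, HX X -> X (c X) /\ ~ Q (c X)).
    { intros X HXX. unfold c. apply epsilon_spec. apply NNPP; intro H.
      apply Hno. exists X; split; auto. intros chi Xc. apply NNPP; intro Hq. apply H; eauto. }
    destruct (Hall (img HX c)) as [chi [[X [HXX <-]] Hq]].
    + exists c. split; auto. intros X HXX; apply Hc; auto.
    + apply (Hc X HXX); auto.
  - intros [X [HXX Hall]] Y [c [Hc ->]]. exists (c X). split; [exists X; auto|].
    apply Hall, Hc; auto.
Qed.

Lemma notAE (HX : hset AP) (Q : asg AP -> Prop) :
  ~ (forall X, HX X -> exists chi, X chi /\ Q chi) <->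
  exists X, HX X /\ forall chi, X chi -> ~ Q chi.
Proof.
  split.
  - intros H. apply NNPP; intro H'. apply H. intros X HXX. apply NNPP; intro H2.
    apply H'. exists X; split; auto. intros chi Xc Hq. apply H2; eauto.
  - intros [X [HXX Hall]] H. destruct (H X HXX) as [chi [Xc Hq]]. apply (Hall chi); auto.
Qed.

Lemma notEA (HX : hset AP) (Q : asg AP -> Prop) :
  ~ (exists X, HX X /\ forall chi, X chi -> Q chi) <->
  forall X, HX X -> exists chi, X chi /\ ~ Q chi.
Proof.
  split.
  - intros H X HXX. apply NNPP; intro H2. apply H. exists X; split; auto.
    intros chi Xc. apply NNPP; intro Hq. apply H2; eauto.
  - intros H [X [HXX Hall]]. destruct (H X HXX) as [chi [Xc Hq]]. auto.
Qed.

End Aux.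
Arguments sup_sub {AP Q Q' HX HX1}.
Arguments ext_sup {AP phi p HX}.

Theorem mainTheorem5 (AP : Type) (phi : qptl AP) (HX : hset AP) :
  in_HAsg_sup (free phi) HX ->
  (hodges phi EA HX <-> exists X, HX X /\ forall chi, X chi -> tarski chi phi) /\
  (hodges phi AE HX <-> forall X, HX X -> exists chi, X chi /\ tarski chi phi).
Proof.
  revert HX; induction phi as [psi|phi IH|phi1 IH1 phi2 IH2|phi1 IH1 phi2 IH2|p phi IH|p phi IH];
    intros HX H.
  - simpl. split; tauto.
  - simpl. destruct (IH HX H) as [E A]. rewrite E, A. split; [apply notAE | apply notEA].
  - assert (EAc : forall HX, in_HAsg_sup (free (QAnd phi1 phi2)) HX ->
      (hodges (QAnd phi1 phi2) EA HX <->
       exists X, HX X /\ forall chi, X chi -> tarski chi (QAnd phi1 phi2))).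
    { clear HX H. intros HX H. simpl. split.
      - intros Hh. apply NNPP; intro Hno.
        set (HX1 := fun Y => HX Y /\ ~ (forall chi, Y chi -> tarski chi phi1)).
        set (HX2 := fun Y => HX Y /\ (forall chi, Y chi -> tarski chi phi1)).
        assert (Hp : is_par HX HX1 HX2).
        { split. { intros Y [[_ a] [_ b]]; auto. }
          intros Y; unfold HX1, HX2; split; [|tauto].
          intros HY. destruct (classic (forall chi, Y chi -> tarski chi phi1)); tauto. }
        destruct (Hh HX1 HX2 Hp) as [[Hne Hh1]|[Hne Hh2]].
        + assert (Hs : in_HAsg_sup (free phi1) HX1).
          { apply (sup_sub H); [intros q; simpl; tauto | intros Y [a _]; exact a | exact Hne]. }
          destruct (proj1 (proj1 (IH1 _ Hs)) Hh1) as [X [[_ Hn] Hall]]. auto.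
        + assert (Hs : in_HAsg_sup (free phi2) HX2).
          { apply (sup_sub H); [intros q; simpl; tauto | intros Y [a _]; exact a | exact Hne]. }
          destruct (proj1 (proj1 (IH2 _ Hs)) Hh2) as [X [[HXX Ha] Hall]].
          apply Hno. exists X; split; auto.
      - intros [X [HXX Hall]] HX1 HX2 [Hd Hu].
        destruct (proj1 (Hu X) HXX) as [h|h]; [left|right]; (split; [exists X; auto|]).
        + assert (Hs : in_HAsg_sup (free phi1) HX1).
          { apply (sup_sub H); [intros q; simpl; tauto | intros Y HY; apply Hu; auto | exists X; auto]. }
          apply (proj2 (proj1 (IH1 _ Hs))). exists X; split; auto. intros chi c; apply Hall; auto.
        + assert (Hs : in_HAsg_sup (free phi2) HX2).
          { apply (sup_sub H); [intros q; simpl; tauto | intros Y HY; apply Hu; auto | exists X; auto]. }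
          apply (proj2 (proj1 (IH2 _ Hs))). exists X; split; auto. intros chi c; apply Hall; auto. }
    split; [apply EAc; auto|].
    change (hodges (QAnd phi1 phi2) EA (dual HX) <->
      forall X, HX X -> exists chi, X chi /\ tarski chi (QAnd phi1 phi2)).
    rewrite EAc by (apply dual_sup; auto). apply dualEA.
  - assert (AEc : forall HX, in_HAsg_sup (free (QOr phi1 phi2)) HX ->
      (hodges (QOr phi1 phi2) AE HX <->
       forall X, HX X -> exists chi, X chi /\ tarski chi (QOr phi1 phi2))).
    { clear HX H. intros HX H. simpl. split.
      - intros [HX1 [HX2 [[Hd Hu] [h1 h2]]]] X HXX.
        destruct (proj1 (Hu X) HXX) as [a|a].
        + assert (ne : nonempty HX1) by (exists X; auto).
          assert (Hs : in_HAsg_sup (free phi1) HX1).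
          { apply (sup_sub H); [intros q; simpl; tauto | intros Y HY; apply Hu; auto | exact ne]. }
          destruct (proj1 (proj2 (IH1 _ Hs)) (h1 ne) X a) as [chi [c t]]. eauto.
        + assert (ne : nonempty HX2) by (exists X; auto).
          assert (Hs : in_HAsg_sup (free phi2) HX2).
          { apply (sup_sub H); [intros q; simpl; tauto | intros Y HY; apply Hu; auto | exact ne]. }
          destruct (proj1 (proj2 (IH2 _ Hs)) (h2 ne) X a) as [chi [c t]]. eauto.
      - intros Hall.
        exists (fun Y => HX Y /\ exists chi, Y chi /\ tarski chi phi1).
        exists (fun Y => HX Y /\ ~ exists chi, Y chi /\ tarski chi phi1).
        split; [split|split].
        + intros Y [[_ a] [_ b]]; auto.
        + intros Y; split; [|tauto]. intros HY.
          destruct (classic (exists chi, Y chi /\ tarski chi phi1)); tauto.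
        + intros ne. assert (Hs : in_HAsg_sup (free phi1) (fun Y => HX Y /\ exists chi, Y chi /\ tarski chi phi1)).
          { apply (sup_sub H); [intros q; simpl; tauto | intros Y [a _]; exact a | exact ne]. }
          apply (proj2 (proj2 (IH1 _ Hs))). intros X [_ Hx]; exact Hx.
        + intros ne. assert (Hs : in_HAsg_sup (free phi2) (fun Y => HX Y /\ ~ exists chi, Y chi /\ tarski chi phi1)).
          { apply (sup_sub H); [intros q; simpl; tauto | intros Y [a _]; exact a | exact ne]. }
          apply (proj2 (proj2 (IH2 _ Hs))). intros X [HXX Hx].
          destruct (Hall X HXX) as [chi [c [t|t]]]; [exfalso; apply Hx; eauto | eauto]. }
    split; [|apply AEc; auto].
    change (hodges (QOr phi1 phi2) AE (dual HX) <->
      exists X, HX X /\ forall chi, X chi -> tarski chi (QOr phi1 phi2)).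
    rewrite AEc by (apply dual_sup; auto). apply dualAE.
  - assert (EAc : forall HX, in_HAsg_sup (free (QEx p phi)) HX ->
      (hodges (QEx p phi) EA HX <->
       exists X, HX X /\ forall chi, X chi -> tarski chi (QEx p phi))).
    { clear HX H. intros HX H. simpl.
      assert (Hs := ext_sup H). rewrite (proj1 (IH _ Hs)). split.
      - intros [Y [[X [F [HXX ->]]] Hall]]. exists X; split; auto. intros chi Xc.
        exists (F chi). apply Hall. exists chi; split; auto.
      - intros [X [HXX Hall]].
        set (F := fun chi : asg AP => epsilon (inhabits (fun _ : nat => false))
                    (fun f => tarski (upd chi p f) phi)).
        exists (ext_set X F p). split; [exists X, F; auto|].
        intros chi' [chi [Xc ->]]. unfold ext_asg, F. apply epsilon_spec. apply Hall; auto. }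
    split; [apply EAc; auto|].
    change (hodges (QEx p phi) EA (dual HX) <->
      forall X, HX X -> exists chi, X chi /\ tarski chi (QEx p phi)).
    rewrite EAc by (apply dual_sup; auto). apply dualEA.
  - assert (AEc : forall HX, in_HAsg_sup (free (QAll p phi)) HX ->
      (hodges (QAll p phi) AE HX <->
       forall X, HX X -> exists chi, X chi /\ tarski chi (QAll p phi))).
    { clear HX H. intros HX H. simpl.
      assert (Hs := ext_sup H). rewrite (proj2 (IH _ Hs)). split.
      - intros Hall X HXX. apply NNPP; intro Hn.
        set (F := fun chi : asg AP => epsilon (inhabits (fun _ : nat => false))
                    (fun f => ~ tarski (upd chi p f) phi)).
        destruct (Hall (ext_set X F p)) as [chi' [[chi [Xc ->]] Ht]].
        + exists X, F; auto.
        + assert (Hex : exists f, ~ tarski (upd chi p f) phi).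
          { apply NNPP; intro H2. apply Hn. exists chi; split; auto.
            intros f. apply NNPP; intro H3. apply H2; eauto. }
          exact (epsilon_spec (inhabits (fun _ : nat => false)) _ Hex Ht).
      - intros Hall Y [X [F [HXX ->]]]. destruct (Hall X HXX) as [chi [Xc Hf]].
        exists (ext_asg chi F p). split; [exists chi; auto | apply Hf]. }
    split; [|apply AEc; auto].
    change (hodges (QAll p phi) AE (dual HX) <->
      exists X, HX X /\ forall chi, X chi -> tarski chi (QAll p phi)).
    rewrite AEc by (apply dual_sup; auto). apply dualAE.
Qed.
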